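(* Let $X$ (treatment) and $Y$ (effect) be binary variables, with values $x,x'$ and $y,y'$ respectively. Suppose we are given $m$ experimental samples and $n$ observational samples, and the experimental quantities $P(y_x),P(y_{x'})$ and the observational quantities $P(y), P(x,y),P(x,y'),P(x',y),P(x',y')$ are estimated by their sample frequencies. Then, for $0<\alpha<1$, the margin of error, in a $1-\alpha$ confidence interval, of each of the (estimated) Tian–Pearl bounds of PNS, $$\max\{0,\;P(y_x)-P(y_{x'}),\;P(y)-P(y_{x'}),\;P(y_x)-P(y)\}\le \mathrm{PNS}\le \min\{P(y_x),\;P(y'_{x'}),\;P(x,y)+P(x',y'),\;P(y_x)-P(y_{x'})+P(x,y')+P(x',y)\},$$ is at most $z_{1-\alpha/2}\left(\sqrt{\tfrac{1}{m}}+\sqrt{\tfrac{1}{n}}\right)$, where $z_{1-\alpha/2}$ is the $1-\alpha/2$ quantile of the standard normal distribution.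
   Context: Counterfactual notation: $y_x$ denotes the event ''$Y$ would be $y$ had $X$ been $x$'' (i.e. $Y_x=y$), and similarly $y_{x'}$, $y'_x$, $y'_{x'}$. Experimental data yield the causal effects $P(y_x)$, $P(y_{x'})$ (with $P(y'_{x'})=1-P(y_{x'})$); observational data yield the joint probabilities $P(x,y)$ etc. The probability of necessity and sufficiency is $\mathrm{PNS}=P(y_x,y'_{x'})$. For a probability $p$ estimated by the frequency $\hat p$ from $k$ samples (experimental quantities from the $m$ experimental samples, observational quantities from the $n$ observational samples), its margin of error in a $1-\alpha$ confidence interval is the (asymptotic normal) quantity $z_{1-\alpha/2}\sqrt{\hat p(1-\hat p)/k}$, and the margin of error of a sum or difference of such estimates is bounded by the sum of their margins of error. *)

(* Defs.v *)
From Stdlib Require Import Reals Lra.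
From Coquelicot Require Import Coquelicot.
Open Scope R_scope.

Definition std_normal_pdf (u : R) : R := exp (- (u ^ 2) / 2) / sqrt (2 * PI).

Definition std_normal_quantile (q z : R) : Prop :=
  is_RInt_gen std_normal_pdf (Rbar_locally m_infty) (at_point z) q.

Definition freq (c k : nat) : R := INR c / INR k.

Definition moe (z : R) (k c : nat) : R :=
  z * sqrt (freq c k * (1 - freq c k) / INR k).

(* Margin of error of the estimated Tian--Pearl lower bound
     max{0, P(y_x)-P(y_x'), P(y)-P(y_x'), P(y_x)-P(y)}:
   each term's margin is the sum of the margins of its estimates (the constant
   0 has margin 0), and the bound's margin is the largest of its terms' margins.
   Experimental counts (out of m): cyx for y_x, cyx' for y_x'.
   Observational counts (out of n): cy for y. *)
Definition moe_lower (z : R) (m n cyx cyx' cy : nat) : R :=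
  Rmax 0
    (Rmax (moe z m cyx + moe z m cyx')
      (Rmax (moe z n cy + moe z m cyx')
            (moe z m cyx + moe z n cy))).

(* Margin of error of the estimated Tian--Pearl upper bound
     min{P(y_x), P(y'_x'), P(x,y)+P(x',y'), P(y_x)-P(y_x')+P(x,y')+P(x',y)}.
   P(y'_x') is estimated by the frequency (m - cyx')/m. *)
Definition moe_upper (z : R) (m n cyx cyx' cxy cxy' cx'y cx'y' : nat) : R :=
  Rmax (moe z m cyx)
    (Rmax (moe z m (m - cyx'))
      (Rmax (moe z n cxy + moe z n cx'y')
            (moe z m cyx + moe z m cyx' + moe z n cxy' + moe z n cx'y))).

(* Main.v *)
Require Import Defs.
From Stdlib Require Import Reals Lra Psatz Lia.
From Coquelicot Require Import Coquelicot.
From Stdlib Require Import ssreflect ssrbool.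
Open Scope R_scope.
Definition gf (t : R) : R := exp (-(t*t)).
Definition G (x : R) : R := RInt gf 0 x.
Definition hf (x t : R) : R := exp (-(x*x)*(1+t*t)) / (1+t*t).
Definition H (x : R) : R := RInt (hf x) 0 1.

Lemma gf_cont x : continuous gf x.
Proof. apply: ex_derive_continuous. unfold gf. auto_derive. easy. Qed.

Lemma gf_ex a b : ex_RInt gf a b.
Proof. apply: ex_RInt_continuous => z _; apply gf_cont. Qed.

Lemma hf_ex x a b : ex_RInt (hf x) a b.
Proof. apply: ex_RInt_continuous => z _; apply: ex_derive_continuous.
unfold hf. auto_derive. nra. Qed.

Lemma dG x : is_derive G x (gf x).
Proof.
apply: is_derive_RInt.
- apply: filter_forall => b. apply: RInt_correct. apply gf_ex.
- apply gf_cont.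
Qed.

Lemma Derive_hf u v : Derive (fun z => hf z v) u = -2 * u * exp (-(u*u)*(1+v*v)).
Proof.
apply: is_derive_unique. unfold hf. auto_derive. nra.
field. nra.
Qed.

Lemma dH x : is_derive H x (-2 * gf x * G x).
Proof.
have E : is_derive H x (RInt (fun t => Derive (fun u => hf u t) x) 0 1).
  apply: (is_derive_RInt_param hf 0 1 x).
  - apply: filter_forall => y t _. unfold hf. auto_derive. nra.
  - move=> t _. apply: (continuity_2d_pt_ext (fun u v => -2 * u * exp (-(u*u)*(1+v*v)))).
      move=> u v; by rewrite Derive_hf.
    apply: continuity_2d_pt_mult.
      apply: continuity_2d_pt_mult. apply: continuity_2d_pt_const. apply: continuity_2d_pt_id1.
    apply: (continuity_1d_2d_pt_comp exp (fun u v => -(u*u)*(1+v*v))).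
      apply: derivable_continuous_pt; apply: derivable_pt_exp.
    apply: continuity_2d_pt_mult.
      apply: continuity_2d_pt_opp. apply: continuity_2d_pt_mult; apply: continuity_2d_pt_id1.
    apply: continuity_2d_pt_plus. apply: continuity_2d_pt_const.
    apply: continuity_2d_pt_mult; apply: continuity_2d_pt_id2.
  - apply: filter_forall => y. apply hf_ex.
have R1 : RInt (fun t => Derive (fun u => hf u t) x) 0 1
        = RInt (fun t => scal (-2 * gf x) (scal x (gf (x*t+0)))) 0 1.
  apply: RInt_ext => t _. rewrite Derive_hf /gf /scal /= /mult /=.
  replace (-(x*x)*(1+t*t)) with (-(x*x) + -((x*t+0)*(x*t+0))) by ring. rewrite exp_plus.
  ring.
rewrite R1 RInt_scal in E.
  rewrite RInt_comp_lin in E. 2: apply gf_ex.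
  move: E. rewrite Rmult_0_r Rmult_1_r !Rplus_0_r. done.
apply: ex_RInt_ext. 2: apply: (ex_RInt_comp_lin gf x 0 0 1); apply gf_ex.
done.
Qed.

Lemma K_const x : 0 < x -> G x * G x + H x = PI / 4.
Proof.
move=> hx.
have Hd : forall t, is_derive (fun y => G y * G y + H y) t 0.
  move=> t.
  have := is_derive_plus _ _ t _ _ (is_derive_mult G G t _ _ (dG t) (dG t) Rmult_comm) (dH t).
  have ->: plus (plus (mult (gf t) (G t)) (mult (G t) (gf t))) (-2 * gf t * G t) = 0.
    rewrite /plus /mult /=. ring.
  done.
rewrite -(eq_is_derive (fun y => G y * G y + H y) 0 x) //.
  rewrite /G /H RInt_point /zero /= Rmult_0_l Rplus_0_l.
  have E : is_RInt (fun t => / (1 + t²)) 0 1 (minus (atan 1) (atan 0)).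
    apply: is_RInt_derive => t _. apply is_derive_atan.
    apply: ex_derive_continuous. auto_derive. unfold Rsqr. nra.
  rewrite (RInt_ext _ (fun t => / (1 + t²))).
    rewrite (is_RInt_unique _ _ _ _ E) atan_1 atan_0 /minus /plus /opp /=. by rewrite Ropp_0 Rplus_0_r.
  move=> t _. rewrite /hf. replace (-(0*0)*(1+t*t)) with 0 by ring. rewrite exp_0 /Rsqr /Rdiv Rmult_1_l. done.
Qed.

Lemma G_le x : 0 <= x -> G x <= sqrt PI / 2.
Proof.
move=> hx.
have G0 : 0 <= G x.
  apply: RInt_ge_0 => //. apply gf_ex. move=> t _. rewrite /gf. apply: Rlt_le; apply exp_pos.
have H0 : 0 <= H x.
  apply: RInt_ge_0. lra. apply hf_ex. move=> t _. rewrite /hf.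
  apply: Rlt_le. apply: Rdiv_lt_0_compat. apply exp_pos. nra.
have KK : G x * G x <= PI / 4.
  destruct (Rle_lt_or_eq_dec 0 x hx) as [h|h].
    have := K_const x h. lra.
  subst x. rewrite /G RInt_point /zero /=. have := PI_RGT_0. nra.
have s0 := sqrt_pos PI. have ss := sqrt_sqrt PI (Rlt_le _ _ PI_RGT_0).
nra.
Qed.

Lemma pdf_cont x : continuous std_normal_pdf x.
Proof. apply: ex_derive_continuous. unfold std_normal_pdf. auto_derive. easy. Qed.

Lemma pdf_ex a b : ex_RInt std_normal_pdf a b.
Proof. apply: ex_RInt_continuous => z _; apply pdf_cont. Qed.

Lemma pdf_pos x : 0 <= std_normal_pdf x.
Proof.
rewrite /std_normal_pdf. apply: Rlt_le. apply: Rdiv_lt_0_compat. apply exp_pos.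
apply: sqrt_lt_R0. have := PI_RGT_0. lra.
Qed.

Lemma pdf_half c : 0 <= c -> RInt std_normal_pdf 0 c <= 1/2.
Proof.
move=> hc.
set r := sqrt 2.
have r0 : 0 < r by apply: sqrt_lt_R0; lra.
have rr : r * r = 2 by apply: sqrt_sqrt; lra.
have E := RInt_comp_lin std_normal_pdf r 0 0 (c / r) (pdf_ex _ _).
rewrite Rmult_0_r Rplus_0_r Rplus_0_r in E.
have e1 : r * (c / r) = c by field; lra.
rewrite e1 in E.
rewrite -E.
have sP : sqrt (2 * PI) = r * sqrt PI.
  rewrite sqrt_mult //. lra. have := PI_RGT_0. lra.
have sp0 : 0 < sqrt PI by apply: sqrt_lt_R0; apply PI_RGT_0.
rewrite (RInt_ext _ (fun y => scal (/ sqrt PI) (gf y))).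
  rewrite RInt_scal. 2: apply gf_ex.
  rewrite /scal /= /mult /=.
  have := G_le (c / r). rewrite /G. move=> h.
  have h' := h (Rdiv_le_0_compat _ _ hc r0).
  have : / sqrt PI * RInt gf 0 (c / r) <= / sqrt PI * (sqrt PI / 2).
    apply: Rmult_le_compat_l. apply: Rlt_le. apply: Rinv_0_lt_compat. done. done.
  have -> : / sqrt PI * (sqrt PI / 2) = 1/2 by field; lra.
  done.
move=> y _. rewrite /scal /= /mult /= /std_normal_pdf /gf sP.
rewrite Rplus_0_r.
have -> : (r * y) ^ 2 = 2 * (y*y) by rewrite /= Rmult_1_r; nra.
have -> : - (2 * (y * y)) / 2 = - (y*y) by field.
field. lra.
Qed.

Lemma pdf_neg a z : a < z -> z < 0 -> RInt std_normal_pdf a z <= 1/2.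
Proof.
move=> az z0.
have C := RInt_Chasles std_normal_pdf a z 0 (pdf_ex _ _) (pdf_ex _ _).
have P : 0 <= RInt std_normal_pdf z 0.
  apply: RInt_ge_0. lra. apply pdf_ex. move=> t _; apply pdf_pos.
have E := RInt_comp_lin std_normal_pdf (-1) 0 (-a) 0 (pdf_ex _ _).
have e1 : -1 * -a + 0 = a by ring.
have e2 : -1 * 0 + 0 = 0 by ring.
rewrite e1 e2 in E.
rewrite (RInt_ext _ (fun y => scal (-1) (std_normal_pdf y))) in E.
  rewrite RInt_scal in E. 2: apply pdf_ex.
  rewrite /scal /= /mult /= in E.
  rewrite -(opp_RInt_swap _ _ _ (pdf_ex _ _)) /opp /= in E.
  have H2 := pdf_half (-a) ltac:(lra).
  rewrite /plus /= in C. lra.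
move=> y _. rewrite /scal /= /mult /= /std_normal_pdf.
have -> : (-1 * y + 0) ^ 2 = y ^ 2 by ring.
done.
Qed.

Lemma z_nonneg q z : 1/2 < q -> std_normal_quantile q z -> 0 <= z.
Proof.
move=> hq HQ.
destruct (Rle_or_lt 0 z) as [h|h]; first done.
exfalso.
have eps0 : 0 < q - 1/2 by lra.
set eps := mkposreal _ eps0.
have := HQ (ball q eps) (locally_ball q eps).
case=> Q Rr [M hM] hR hQR.
set a := Rmin (M - 1) (z - 1).
have ha : a < M. rewrite /a. have := Rmin_l (M-1) (z-1). lra.
have ha2 : a < z. rewrite /a. have := Rmin_r (M-1) (z-1). lra.
have [y [Hy By]] := hQR a z (hM a ha) hR.
have Ey := is_RInt_unique _ _ _ _ Hy. simpl in Ey.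
have := pdf_neg a z ha2 h. rewrite Ey.
move: By. rewrite /ball /= /AbsRing_ball /abs /minus /plus /opp /= => B.
have := Rle_abs (y + - q). rewrite Rabs_minus_sym in B. have := Rle_abs (q - y).
rewrite /eps /= in B. move=> *. 
have := Rabs_def2 _ _ B. lra.
Qed.

Lemma moe_le z k c : 0 <= z -> (0 < k)%nat -> (c <= k)%nat ->
  moe z k c <= z * sqrt (1 / INR k) / 2.
Proof.
move=> hz hk hc.
have k0 : 0 < INR k by apply: lt_0_INR.
have c0 : 0 <= INR c by apply: pos_INR.
have ck : INR c <= INR k by apply: le_INR; lia.
set p := freq c k.
have p0 : 0 <= p by rewrite /p /freq; apply: Rdiv_le_0_compat.
have p1 : p <= 1.
  rewrite /p /freq. apply/Rcomplements.Rle_div_l => //. lra.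
rewrite /moe -/p.
have S : sqrt (p * (1 - p) / INR k) <= sqrt (1 / INR k) / 2.
  have -> : sqrt (1 / INR k) / 2 = sqrt (1 / INR k / 4).
    rewrite /Rdiv (sqrt_mult (1 * / INR k)). 
    - have -> : sqrt (/ 4) = / 2.
        rewrite -(sqrt_Rsqr (/2)). f_equal. rewrite /Rsqr. field. lra.
      done.
    - apply: Rlt_le. apply: Rmult_lt_0_compat. lra. by apply: Rinv_0_lt_compat.
    - lra.
  apply: sqrt_le_1_alt.
  rewrite /Rdiv. have ik : 0 < / INR k by apply: Rinv_0_lt_compat.
  have pp : p * (1 - p) <= /4 by have := Rle_0_sqr (p - /2); rewrite /Rsqr; lra.
  have := Rmult_le_compat_r (/ INR k) _ _ (Rlt_le _ _ ik) pp. lra.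
have := Rmult_le_compat_l z _ _ hz S. lra.
Qed.

Theorem theorem1 (alpha z : R) (m n : nat)
  (cyx cyx' cy cxy cxy' cx'y cx'y' : nat) :
  0 < alpha < 1 ->
  std_normal_quantile (1 - alpha / 2) z ->
  (0 < m)%nat -> (0 < n)%nat ->
  (cyx <= m)%nat -> (cyx' <= m)%nat ->
  (cy <= n)%nat -> (cxy <= n)%nat -> (cxy' <= n)%nat ->
  (cx'y <= n)%nat -> (cx'y' <= n)%nat ->
  moe_lower z m n cyx cyx' cy <= z * (sqrt (1 / INR m) + sqrt (1 / INR n)) /\
  moe_upper z m n cyx cyx' cxy cxy' cx'y cx'y'
    <= z * (sqrt (1 / INR m) + sqrt (1 / INR n)).
Proof.
move=> ha hq hm hn h1 h2 h3 h4 h5 h6 h7.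
have hz : 0 <= z by apply: (z_nonneg _ _ _ hq); lra.
have sm := sqrt_pos (1 / INR m). have sn := sqrt_pos (1 / INR n).
have zm := Rmult_le_pos _ _ hz sm. have zn := Rmult_le_pos _ _ hz sn.
have m1 := moe_le z m cyx hz hm h1.
have m2 := moe_le z m cyx' hz hm h2.
have m3 := moe_le z m (m - cyx') hz hm ltac:(lia).
have n1 := moe_le z n cy hz hn h3.
have n2 := moe_le z n cxy hz hn h4.
have n3 := moe_le z n cxy' hz hn h5.
have n4 := moe_le z n cx'y hz hn h6.
have n5 := moe_le z n cx'y' hz hn h7.
rewrite Rmult_plus_distr_l.
split; rewrite /moe_lower /moe_upper; repeat apply: Rmax_lub; lra.
Qed.
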